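(* Let $m,n$ be positive integers. There is an explicit bijection between the set of $m\times n$ partial alternating sign matrices and the set of $(m,n)$-partial height-function matrices.
   Context: An $m\times n$ partial alternating sign matrix is an $m\times n$ matrix with entries in $\{-1,0,1\}$ such that: the entries of each row and of each column sum to $0$ or $1$; the nonzero entries in each row and in each column alternate in sign; in each column the first (topmost) nonzero entry, if any, is $1$, and in each row the last (rightmost) nonzero entry, if any, is $1$. An $(m,n)$-partial height-function matrix is an integer matrix $(h_{i,j})_{0\le i\le m,\,0\le j\le n}$ with all entries nonnegative, $h_{0,k}=k$ for $0\le k\le n$, $h_{\ell,0}=\ell$ for $0\le \ell\le m$, and such that any two horizontally or vertically adjacent entries differ by exactly $1$. *)

(* Defs.v *)
From mathcomp Require Import all_boot all_order all_algebra.
Set Implicit Arguments. Unset Strict Implicit. Unset Printing Implicit Defensive.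
Import Order.TTheory GRing.Theory Num.Theory.
Local Open Scope ring_scope.

Definition is_pasm (m n : nat) (A : 'M[int]_(m, n)) : Prop :=
  (forall i j, A i j \in [:: -1; 0; 1]) /\
  (forall i, \sum_j A i j \in [:: 0; 1]) /\
  (forall j, \sum_i A i j \in [:: 0; 1]) /\
  (forall i (j1 j2 : 'I_n), (j1 < j2)%N -> A i j1 != 0 -> A i j2 != 0 ->
     (forall j : 'I_n, (j1 < j)%N -> (j < j2)%N -> A i j = 0) ->
     A i j1 = - A i j2) /\
  (forall j (i1 i2 : 'I_m), (i1 < i2)%N -> A i1 j != 0 -> A i2 j != 0 ->
     (forall i : 'I_m, (i1 < i)%N -> (i < i2)%N -> A i j = 0) ->
     A i1 j = - A i2 j) /\
  (forall i j, A i j != 0 -> (forall i' : 'I_m, (i' < i)%N -> A i' j = 0) ->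
     A i j = 1) /\
  (forall i j, A i j != 0 -> (forall j' : 'I_n, (j < j')%N -> A i j' = 0) ->
     A i j = 1).

Definition is_phf (m n : nat) (h : 'M[int]_(m.+1, n.+1)) : Prop :=
  (forall i j, 0 <= h i j) /\
  (forall k : 'I_n.+1, h ord0 k = (k : nat)%:Z) /\
  (forall l : 'I_m.+1, h l ord0 = (l : nat)%:Z) /\
  (forall (i i' : 'I_m.+1) (j : 'I_n.+1), (i' : nat) = i.+1 ->
     `|h i' j - h i j| = 1) /\
  (forall (i : 'I_m.+1) (j j' : 'I_n.+1), (j' : nat) = j.+1 ->
     `|h i j' - h i j| = 1).

(* Main.v *)
Require Import Defs.
From mathcomp Require Import all_boot all_order all_algebra.
From mathcomp Require Import zify.
Set Implicit Arguments. Unset Strict Implicit. Unset Printing Implicit Defensive.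
Import Order.TTheory GRing.Theory Num.Theory.
Local Open Scope ring_scope.

Definition psum (N : nat) (x : 'I_N -> int) (k : nat) : int :=
  \sum_(j < N | (j < k)%N) x j.

Section Psum.
Variables (N : nat) (x : 'I_N -> int).

Lemma psum0 : psum x 0 = 0.
Proof. by rewrite /psum big_pred0. Qed.

Lemma psumS (j : 'I_N) : psum x j.+1 = psum x j + x j.
Proof.
rewrite /psum (bigD1 j) //= addrC; congr (_ + _).
by apply: eq_bigl => k; rewrite ltnS ltn_neqAle andbC.
Qed.

Lemma psumN : psum x N = \sum_j x j.
Proof. by apply: eq_bigl => j; rewrite ltn_ord. Qed.

Lemma psum_const k1 k2 : (k1 <= k2 <= N)%N ->
  (forall l : 'I_N, (k1 <= l)%N -> (l < k2)%N -> x l = 0) -> psum x k2 = psum x k1.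
Proof.
elim: k2 => [|k2 IH] /andP[h1 h2] hz.
  by have -> : k1 = 0%N by lia.
have [->//|hk] := eqVneq k1 k2.+1.
have hk2 : (k2 < N)%N by lia.
rewrite (psumS (Ordinal hk2)) /= hz /=; try lia.
rewrite addr0 IH //; first by apply/andP; lia.
move=> l a b; apply: hz; lia.
Qed.

Definition in01 (z : int) := z \in [:: 0; 1].
Lemma in01P z : in01 z -> z = 0 \/ z = 1.
Proof. by rewrite /in01 !inE => /orP[/eqP->|/eqP->]; [left|right]. Qed.

Lemma to_pre :
  (forall (j1 j2 : 'I_N), (j1 < j2)%N -> x j1 != 0 -> x j2 != 0 ->
     (forall j : 'I_N, (j1 < j)%N -> (j < j2)%N -> x j = 0) -> x j1 = - x j2) ->
  (forall j, x j != 0 -> (forall j' : 'I_N, (j' < j)%N -> x j' = 0) -> x j = 1) ->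
  forall k, (k <= N)%N -> in01 (psum x k).
Proof.
move=> Halt HF.
suff H : forall k, (k <= N)%N -> in01 (psum x k) /\
   forall j : 'I_N, (k <= j)%N -> x j != 0 ->
     (forall l : 'I_N, (k <= l)%N -> (l < j)%N -> x l = 0) -> x j = 1 - 2 * psum x k.
  by move=> k /H[].
elim=> [|k IH] hk.
  rewrite psum0; split; first by rewrite /in01 !inE eqxx.
  move=> j _ hj hz; rewrite mulr0 subr0; apply: HF => // j' hj'; apply: hz => //.
have hkN : (k < N)%N by lia.
have [IH1 IH2] := IH (ltnW hkN).
rewrite (psumS (Ordinal hkN)).
have [hx|hx] := eqVneq (x (Ordinal hkN)) 0.
  rewrite hx addr0; split => // j hj hxj hz; apply: IH2 => //; first lia.
  move=> l hl1 hl2; have [e|ne] := eqVneq (val l) k.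
    by rewrite (_ : l = Ordinal hkN) //; apply: val_inj.
  apply: hz => //; by rewrite ltn_neqAle eq_sym ne.
have e := IH2 (Ordinal hkN) (leqnn _) hx (fun l a b => False_ind _ (ltac:(simpl in *; lia))).
split.
  by rewrite e; case/in01P: IH1 => ->.
move=> j hj hxj hz.
have := Halt (Ordinal hkN) j hj hx hxj (fun l a b => hz l a b).
rewrite e => e2.
case/in01P: IH1 e2 => -> e2; lia.
Qed.


Lemma xE (j : 'I_N) : x j = psum x j.+1 - psum x j.
Proof. by rewrite psumS addrC addKr. Qed.

Lemma pre_to : (forall k, (k <= N)%N -> in01 (psum x k)) ->
  [/\ (forall j, x j \in [:: -1; 0; 1]),
      \sum_j x j \in [:: 0; 1],
  (forall (j1 j2 : 'I_N), (j1 < j2)%N -> x j1 != 0 -> x j2 != 0 ->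
     (forall j : 'I_N, (j1 < j)%N -> (j < j2)%N -> x j = 0) -> x j1 = - x j2) &
  (forall j, x j != 0 -> (forall j' : 'I_N, (j' < j)%N -> x j' = 0) -> x j = 1)].
Proof.
move=> Hp; split.
- move=> j; rewrite xE.
  have := Hp j.+1 (ltn_ord j); have := Hp j (ltnW (ltn_ord j)).
  by case/in01P => -> /in01P[] ->.
- by rewrite -psumN; apply: Hp.
- move=> j1 j2 h12 h1 h2 hz.
  have e : psum x j2 = psum x j1.+1.
    apply: psum_const; first by apply/andP; split; [lia| apply: ltnW].
    by move=> l a b; apply: hz.
  move: h1 h2; rewrite !xE e.
  have := Hp j1.+1 (ltn_ord j1); have := Hp j1 (ltnW (ltn_ord j1)); have := Hp j2.+1 (ltn_ord j2).
  by case/in01P => -> /in01P[] -> /in01P[] ->.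
- move=> j hj hz.
  have e : psum x j = psum x 0.
    apply: psum_const; [have := ltn_ord j; lia | by move=> l _; apply: hz].
  move: hj; rewrite xE e psum0.
  by have := Hp j.+1 (ltn_ord j); case/in01P => ->.
Qed.

End Psum.

Lemma psumD N (x y : 'I_N -> int) k : psum (fun j => x j + y j) k = psum x k + psum y k.
Proof. exact: big_split. Qed.

Lemma psum_eq N (x y : 'I_N -> int) k : (forall j : 'I_N, (j < k)%N -> x j = y j) ->
  psum x k = psum y k.
Proof. by move=> h; apply: eq_bigr => j /h. Qed.

Definition pre_ok m n (A : 'M[int]_(m, n)) :=
  (forall j k, (k <= m)%N -> in01 (psum (fun i => A i j) k)) /\
  (forall i k, (k <= n)%N -> in01 (psum (fun j => A i (rev_ord j)) k)).

Lemma pasm_pre m n (A : 'M[int]_(m, n)) : is_pasm A -> pre_ok A.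
Proof.
case=> [hE [hR [hC [hRA [hCA [hCF hRF]]]]]]; split.
  by move=> j; apply: to_pre => [j1 j2|i]; [apply: hCA | apply: hCF].
move=> i; apply: to_pre.
  move=> j1 j2 h12 h1 h2 hz.
  have := hRA i (rev_ord j2) (rev_ord j1) _ h2 h1.
  have := ltn_ord j1; have := ltn_ord j2.
  move=> a b e; rewrite e; [by rewrite opprK | rewrite /=; lia |].
  move=> j c d; rewrite -(rev_ordK j); apply: hz; move: c d => /=;
    have := ltn_ord j; lia.
move=> j hj hz; apply: hRF => // j' hj'; rewrite -(rev_ordK j'); apply: hz.
by move: hj' => /=; have := ltn_ord j; have := ltn_ord j'; lia.
Qed.

Lemma pre_pasm m n (A : 'M[int]_(m, n)) : pre_ok A -> is_pasm A.
Proof.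
case=> hc hr.
have HC j := pre_to (hc j).
have HR i := pre_to (hr i).
split; first by move=> i j; have [h _ _ _] := HC j; apply: h.
split.
  move=> i; have [_ h _ _] := HR i.
  by rewrite (reindex_inj rev_ord_inj).
split; first by move=> j; have [_ h _ _] := HC j.
split.
  move=> i j1 j2 h12 h1 h2 hz; have [_ _ h _] := HR i.
  have := h (rev_ord j2) (rev_ord j1); rewrite !rev_ordK => e.
  rewrite e //; [by rewrite opprK | rewrite /=; have := ltn_ord j2; lia |].
  move=> j c d; rewrite -(rev_ordK j); apply: hz; move: c d => /=;
    have := ltn_ord j; have := ltn_ord j1; have := ltn_ord j2; lia.
split; first by move=> j i1 i2; have [_ _ h _] := HC j; apply: h.
split; first by move=> i j; have [_ _ _ h] := HC j; apply: h.
move=> i j hj hz; have [_ _ _ h] := HR i.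
have := h (rev_ord j); rewrite rev_ordK => e; apply: e => // j' hj'.
rewrite hz //; move: hj' => /=; have := ltn_ord j; have := ltn_ord j'; lia.
Qed.

Lemma abs1 (z : int) : z = 1 \/ z = -1 -> `|z| = 1.
Proof. by case=> ->. Qed.

Lemma abs1' (z : int) : `|z| = 1 -> z = 1 \/ z = -1.
Proof. by case: z => [[|[|k]]|[|k]] //= _; [left|right]. Qed.

Section F.
Variables (m n : nat) (A : 'M[int]_(m, n)).

Definition cc (i j : nat) : int :=
  psum (fun i' => psum (fun j' => A i' (rev_ord j')) j) i.

Lemma cc0i j : cc 0 j = 0.
Proof. exact: psum0. Qed.

Lemma cci0 i : cc i 0 = 0.
Proof. by rewrite /cc /psum big1 // => i' _; rewrite -/(psum _ 0) psum0. Qed.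

Lemma ccSi (I : 'I_m) j : cc I.+1 j = cc I j + psum (fun j' => A I (rev_ord j')) j.
Proof. exact: psumS. Qed.

Lemma ccSj i (J : 'I_n) : cc i J.+1 = cc i J + psum (fun i' => A i' (rev_ord J)) i.
Proof.
rewrite /cc -psumD; apply: psum_eq => i' _; exact: psumS.
Qed.

Hypothesis hpre : pre_ok A.

Lemma cc_le_i j : (j <= n)%N -> forall i, (i <= m)%N -> cc i j <= i%:Z.
Proof.
move=> hj; elim=> [|i IH] hi; first by rewrite cc0i.
have hm : (i < m)%N by lia.
have := ccSi (Ordinal hm) j; rewrite /= => ->.
have := IH (ltnW hm); have := hpre.2 (Ordinal hm) j hj.
case/in01P => ->; lia.
Qed.

Lemma cc_le_j i : (i <= m)%N -> forall j, (j <= n)%N -> cc i j <= j%:Z.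
Proof.
move=> hi; elim=> [|j IH] hj; first by rewrite cci0.
have hn : (j < n)%N by lia.
have := ccSj i (Ordinal hn); rewrite /= => ->.
have := IH (ltnW hn); have := hpre.1 (rev_ord (Ordinal hn)) i hi.
case/in01P => ->; lia.
Qed.

Definition fmx : 'M[int]_(m.+1, n.+1) :=
  \matrix_(i, j) ((i : nat)%:Z + (j : nat)%:Z - 2 * cc i j).

Lemma fmx_phf : is_phf fmx.
Proof.
split.
  move=> i j; rewrite mxE.
  have hi := ltn_ord i; have hj := ltn_ord j.
  have := cc_le_i (j := j) hj hi; have := cc_le_j (i := i) hi hj; lia.
split; first by move=> k; rewrite mxE cc0i /=; lia.
split; first by move=> l; rewrite mxE cci0 /=; lia.
split.
  move=> i i' j e; rewrite !mxE e.
  have hm : (i < m)%N by have := ltn_ord i'; lia.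
  have := ccSi (Ordinal hm) j; rewrite /= => ->.
  have := hpre.2 (Ordinal hm) j (ltn_ord j).
  by move/in01P => h; apply: abs1; case: h => ->; lia.
move=> i j j' e; rewrite !mxE e.
have hn : (j < n)%N by have := ltn_ord j'; lia.
have := ccSj i (Ordinal hn); rewrite /= => ->.
have := hpre.1 (rev_ord (Ordinal hn)) i (ltn_ord i).
by move/in01P => h; apply: abs1; case: h => ->; lia.
Qed.

End F.

Lemma b2z (b : bool) : (b : nat)%:Z = if b then 1 else 0.
Proof. by case: b. Qed.

Section G.
Variables (m n : nat) (h : 'M[int]_(m.+1, n.+1)).
Hypothesis hphf : is_phf h.

Definition H (i j : nat) := h (inord i) (inord j).
Definition rr (i j : nat) : int := (((H i.+1 j < H i j)%R : bool) : nat)%:Z.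
Definition ss (i j : nat) : int := (((H i j.+1 < H i j)%R : bool) : nat)%:Z.
Definition gmx : 'M[int]_(m, n) :=
  \matrix_(i, j) (rr i (rev_ord j).+1 - rr i (rev_ord j)).

Lemma Hval (i : 'I_m.+1) (j : 'I_n.+1) : h i j = H i j.
Proof. by rewrite /H !inord_val. Qed.

Lemma Hv i j : (i < m)%N -> (j <= n)%N -> `|H i.+1 j - H i j| = 1.
Proof.
move=> hi hj; case: hphf => _ [_ [_ [hv _]]].
by apply: hv; rewrite !inordK //; lia.
Qed.

Lemma Hh i j : (i <= m)%N -> (j < n)%N -> `|H i j.+1 - H i j| = 1.
Proof.
move=> hi hj; case: hphf => _ [_ [_ [_ hh]]].
by apply: hh; rewrite !inordK //; lia.
Qed.

Lemma H0j j : (j <= n)%N -> H 0 j = j%:Z.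
Proof.
move=> hj; case: hphf => _ [h0 _].
rewrite /H (_ : inord 0 = ord0); last by apply: val_inj; rewrite /= inordK.
by rewrite h0 inordK.
Qed.

Lemma Hi0 i : (i <= m)%N -> H i 0 = i%:Z.
Proof.
move=> hi; case: hphf => _ [_ [h0 _]].
rewrite /H (_ : inord 0 = ord0); last by apply: val_inj; rewrite /= inordK.
by rewrite h0 inordK.
Qed.

Lemma rr01 i j : in01 (rr i j).
Proof. by rewrite /rr b2z; case: ifP. Qed.

Lemma ss01 i j : in01 (ss i j).
Proof. by rewrite /ss b2z; case: ifP. Qed.

Lemma rr0 i : (i < m)%N -> rr i 0 = 0.
Proof. move=> hi; rewrite /rr b2z !Hi0 //; try lia. case: ifP => //; lia. Qed.

Lemma ss0 j : (j < n)%N -> ss 0 j = 0.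
Proof. move=> hj; rewrite /ss b2z !H0j //; try lia. case: ifP => //; lia. Qed.

Lemma square i j : (i < m)%N -> (j < n)%N ->
  rr i j.+1 - rr i j = ss i.+1 j - ss i j.
Proof.
move=> hi hj.
have a1 := abs1' (Hv hi (ltnW hj)).
have a2 := abs1' (Hv hi hj).
have a3 := abs1' (Hh (ltnW hi) hj).
have a4 := abs1' (Hh hi hj).
rewrite /rr /ss !b2z; do 4! case: ifP; lia.
Qed.

Lemma gmx_row (i : 'I_m) k : (k <= n)%N ->
  psum (fun j => gmx i (rev_ord j)) k = rr i k.
Proof.
elim: k => [|k IH] hk; first by rewrite psum0 rr0.
have hkn : (k < n)%N by lia.
rewrite (psumS _ (Ordinal hkn)) IH ?(ltnW hkn) // mxE rev_ordK /=.
by rewrite addrC subrK.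
Qed.

Lemma gmx_col (j : 'I_n) k : (k <= m)%N ->
  psum (fun i => gmx i j) k = ss k (rev_ord j).
Proof.
elim: k => [|k IH] hk; first by rewrite psum0 ss0.
have hkm : (k < m)%N by lia.
rewrite (psumS _ (Ordinal hkm)) IH ?(ltnW hkm) // mxE /= square //.
  by rewrite addrC subrK.
have := ltn_ord j; lia.
Qed.

Lemma gmx_pasm : is_pasm gmx.
Proof.
apply: pre_pasm; split.
  by move=> j k hk; rewrite gmx_col //; apply: ss01.
by move=> i k hk; rewrite gmx_row //; apply: rr01.
Qed.

Lemma fgK : fmx gmx = h.
Proof.
apply/matrixP => i j; rewrite mxE Hval.
have hi : (i <= m)%N by have := ltn_ord i; lia.
have hj : (j <= n)%N by have := ltn_ord j; lia.
rewrite /cc (psum_eq (y := fun i' => rr i' j)); last by move=> i' _; rewrite gmx_row.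
move: hi; elim: (i : nat) => [|a IH] ha.
  by rewrite psum0 H0j //; lia.
have ham : (a < m)%N by lia.
rewrite (psumS _ (Ordinal ham)) /=.
have := IH (ltnW ham).
have := abs1' (Hv ham hj).
rewrite /rr b2z; case: ifP; lia.
Qed.

End G.

Lemma gfK m n (A : 'M[int]_(m, n)) : pre_ok A -> gmx (fmx A) = A.
Proof.
move=> hp.
have key (I : 'I_m) k : (k <= n)%N -> rr (fmx A) I k = psum (fun j' => A I (rev_ord j')) k.
  move=> hk; have hI := ltn_ord I; rewrite /rr /H !mxE !inordK //; try lia.
  have := ccSi A I k; rewrite /= => ->.
  have := hp.2 I k hk.
  by case/in01P => ->; rewrite b2z; case: ifP; lia.
apply/matrixP => i j; rewrite mxE !key //; last by apply: ltnW.
by rewrite psumS addrC addKr rev_ordK.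
Qed.

From Stdlib Require Import ProofIrrelevance.

Lemma sig_eq (T : Type) (P : T -> Prop) (a b : {x | P x}) :
  proj1_sig a = proj1_sig b -> a = b.
Proof.
case: a b => [x px] [y py] /= e; subst y; congr exist; apply: proof_irrelevance.
Qed.

Close Scope ring_scope.

Theorem lemma3p10 (m n : nat) (hm : (0 < m)%N) (hn : (0 < n)%N) :
  exists f : {A : 'M[int]_(m, n) | is_pasm A} ->
             {h : 'M[int]_(m.+1, n.+1) | is_phf h},
    bijective f.
Proof.
pose f (A : {A : 'M[int]_(m, n) | is_pasm A}) : {h : 'M[int]_(m.+1, n.+1) | is_phf h} :=
  exist _ (fmx (proj1_sig A)) (fmx_phf (pasm_pre (proj2_sig A))).
pose g (h : {h : 'M[int]_(m.+1, n.+1) | is_phf h}) : {A : 'M[int]_(m, n) | is_pasm A} :=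
  exist _ (gmx (proj1_sig h)) (gmx_pasm (proj2_sig h)).
exists f, g.
  by move=> [A pA]; apply: sig_eq; rewrite /= gfK //; apply: pasm_pre.
by move=> [h ph]; apply: sig_eq; rewrite /= fgK.
Qed.
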